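(* Let $T$ be a monoid and $(X,\cdot)$ an order-preserving left action of $T$ on a semilattice $X$ with identity. Then the $*$-left Ehresmann monoid $\mathcal{P}_\ell(T,X)$ has proper basis $H^{\mathcal{P}}=\{te:t\in T,e\in X\}$. Moreover, for any $\alpha\in\mathcal{P}_\ell(T,X)$ with $H^{\mathcal{P}}$-canonical form $\alpha=h_1\cdots h_n$, we have $\alpha^+=h_1^+$ and $\alpha^*=h_n^*$.
   Context: A semilattice is a commutative semigroup of idempotents, ordered by $e\le f$ iff $ef=e$. An order-preserving left action satisfies $1_T\cdot x=x$, $s\cdot(t\cdot x)=st\cdot x$, $x\le y\Rightarrow t\cdot x\le t\cdot y$. Construction: let $T*X$ be the semigroup free product; it acts on $X$ with elements of $X$ acting by multiplication; put $\omega^+=\omega\cdot1_X$; let $\sim$ be the semigroup congruence generated by $\{(\alpha^+\alpha,\alpha)\}\cup\{(1_T,1_X)\}$ and $\mathcal{P}_\ell(T,X)=(T*X)/\sim$ with $[\alpha]^+=[\alpha^+]$; identify $X$ and $T$ with their (injective) images $\{[x]\}$, $\{[t]\}$. It is known that $\mathcal{P}_\ell(T,X)$ is left Ehresmann with projections $X$, generated by $X\cup T$, with unique $T$-normal forms ($t_0e_1t_1\cdots e_nt_n$, $n\ge0$, $e_i\in X\setminus\{1\}$, $t_1,\dots,t_{n-1}\in T\setminus\{1\}$, $e_i<(t_ie_{i+1}\cdots e_nt_n)^+$), and each $\sigma$-class contains exactly one element of $T$. It becomes $*$-left Ehresmann via $a^*=e_n$ if $n\ge1$ and $t_n=1$ in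 the $T$-normal form, $a^*=1$ otherwise. A $*$-left Ehresmann monoid is a monoid with unary operations $+,*$ satisfying $x^+x=x$, $(x^+y^+)^+=x^+y^+$, $x^+y^+=y^+x^+$, $(xy)^+=(xy^+)^+$, $xx^*=x$, $(x^* )^*=x^*$, $x^*y^*=y^*x^*$, $(xy^* )^*y^*=(xy^* )^*$, $(x^* )^+=x^*$, $(x^+)^*=x^+$; $E=\{a^+\}=\{a^*\}$; $\sigma$ is the least monoid congruence containing $E\times E$. $H\subseteq M$ is atomic if: (H1) $E\subseteq H$; (H2) $h\in H,e\in E$ imply $he\in H$ and $(he)^*=h^*e$; (H3) if $h\in H$, $k\in H\setminus E$, $h^*\ge k^+$ then $hk\in H$ and $(hk)^*=k^*$; (H4) every $m$ is $\sigma$-related to some $h\in H$; (H5) if $h,k,w\in H$, $hk\,\sigma\,w$, $k^*=w^*$, then some $u\in H$ has $u\,\sigma\,h$, $u^*\ge k^+$. $H$ is proper if ($h^*=k^*$ and $h\,\sigma\,k$) iff $h=k$. $h_1\cdots h_n$ is in $H$-canonical form if $h_i^*<h_{i+1}^+$ ($1\le i<n$) and $h_i\notin E$ ($2\le i\le n$); $M$ has $H$-canonical forms if each element has exactly one such expression. A basis is an atomic generating set $H$ for which $M$ has $H$-canonical forms; a proper basis is a basis which is proper. *)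

(* Defs.v *)
(* Setoid presentation of P_l(T,X): elements are words in the
   free monoid on T + X, and equality in P_l(T,X) is the congruence [sim]. *)
From Stdlib Require Import List ClassicalEpsilon.
Import ListNotations.

Record Monoid := {
  mcar :> Type;
  mop : mcar -> mcar -> mcar;
  mone : mcar;
  massoc : forall a b c, mop a (mop b c) = mop (mop a b) c;
  mone_l : forall a, mop mone a = a;
  mone_r : forall a, mop a mone = a }.

Record Semilattice := {
  scar :> Type;
  sop : scar -> scar -> scar;
  sone : scar;
  sassoc : forall a b c, sop a (sop b c) = sop (sop a b) c;
  scomm : forall a b, sop a b = sop b a;
  sidem : forall a, sop a a = a;
  sone_l : forall a, sop sone a = a }.

Arguments mop {_}.
Arguments mone {_}.
Arguments sop {_}.
Arguments sone {_}.
Definition sle {X : Semilattice} (e f : X) : Prop := sop e f = e.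
Definition slt {X : Semilattice} (e f : X) : Prop := sle e f /\ e <> f.

Record OPAction (T : Monoid) (X : Semilattice) := {
  act :> T -> X -> X;
  act_one : forall x, act (mone) x = x;
  act_comp : forall s t x, act s (act t x) = act (mop s t) x;
  act_mono : forall t x y, sle x y -> sle (act t x) (act t y) }.
Arguments act {_ _}.

Section PL.
Context {T : Monoid} {X : Semilattice} (A : OPAction T X).

Definition letter : Type := (mcar T + scar X)%type.
Definition word : Type := list letter.

Fixpoint wact (w : word) (x : X) : X :=
  match w with
  | [] => x
  | inl t :: w' => A t (wact w' x)
  | inr e :: w' => sop e (wact w' x)
  end.

Definition wplus (w : word) : X := wact w (sone).

(* the congruence: free-product relations, nil = 1_T (adjoined identity),
   1_T = 1_X, and alpha^+ alpha = alpha *)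
Inductive sim : word -> word -> Prop :=
| sim_TT t t' : sim [inl t; inl t'] [inl (mop t t')]
| sim_XX e f : sim [inr e; inr f] [inr (sop e f)]
| sim_nil : sim [] [inl (mone)]
| sim_one : sim [inl (mone)] [inr (sone)]
| sim_plus a : sim (inr (wplus a) :: a) a
| sim_refl a : sim a a
| sim_sym a b : sim a b -> sim b a
| sim_trans a b c : sim a b -> sim b c -> sim a c
| sim_cat a b c d : sim a b -> sim c d -> sim (a ++ c) (b ++ d).

Definition plus (a : word) : word := [inr (wplus a)].

(* T-normal forms t0 e1 t1 ... en tn, encoded as t0 and [(e1,t1);...;(en,tn)] *)
Definition pairs_word (ps : list (scar X * mcar T)) : word :=
  flat_map (fun p => [inr (fst p); inl (snd p)]) ps.

Definition nf_word (t0 : T) (ps : list (scar X * mcar T)) : word :=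
  inl t0 :: pairs_word ps.

Definition nf_conds (ps : list (scar X * mcar T)) : Prop :=
  forall pre e t post, ps = pre ++ (e, t) :: post ->
    e <> sone /\
    (post <> [] -> t <> mone) /\
    slt e (wplus (inl t :: pairs_word post)).

Definition is_TNF (a : word) (t0 : T) (ps : list (scar X * mcar T)) : Prop :=
  sim (nf_word t0 ps) a /\ nf_conds ps.

Definition star_val (ps : list (scar X * mcar T)) : X :=
  match ps with
  | [] => sone
  | _ => let (e, t) := last ps (sone, mone) in
         if excluded_middle_informative (t = mone) then e else sone
  end.

Definition star (a : word) : word :=
  let nf := epsilon (inhabits (mone, @nil (scar X * mcar T)))
                    (fun p => is_TNF a (fst p) (snd p)) in
  [inr (star_val (snd nf))].

Definition is_proj (a : word) : Prop := exists x : X, sim a [inr x].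
Definition leE (a b : word) : Prop := sim (a ++ b) a.
Definition ltE (a b : word) : Prop := leE a b /\ ~ sim a b.

Inductive sigma : word -> word -> Prop :=
| sg_sim a b : sim a b -> sigma a b
| sg_proj a b : is_proj a -> is_proj b -> sigma a b
| sg_sym a b : sigma a b -> sigma b a
| sg_trans a b c : sigma a b -> sigma b c -> sigma a c
| sg_cat a b c d : sigma a b -> sigma c d -> sigma (a ++ c) (b ++ d).

Definition atomic (H : word -> Prop) : Prop :=
  (forall a, is_proj a -> H a) /\
  (forall h e, H h -> is_proj e -> H (h ++ e) /\ sim (star (h ++ e)) (star h ++ e)) /\
  (forall h k, H h -> H k -> ~ is_proj k -> leE (plus k) (star h) ->
     H (h ++ k) /\ sim (star (h ++ k)) (star k)) /\
  (forall m, exists h, H h /\ sigma m h) /\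
  (forall h k w, H h -> H k -> H w -> sigma (h ++ k) w -> sim (star k) (star w) ->
     exists u, H u /\ sigma u h /\ leE (plus k) (star u)).

Definition proper (H : word -> Prop) : Prop :=
  forall h k, H h -> H k -> ((sim (star h) (star k) /\ sigma h k) <-> sim h k).

Definition generating (H : word -> Prop) : Prop :=
  forall m, exists hs, Forall H hs /\ sim m (concat hs).

Definition canonical (H : word -> Prop) (hs : list word) (m : word) : Prop :=
  hs <> [] /\ Forall H hs /\ sim m (concat hs) /\
  (forall i, S i < length hs -> ltE (star (nth i hs [])) (plus (nth (S i) hs []))) /\
  (forall i, 1 <= i < length hs -> ~ is_proj (nth i hs [])).

Definition has_canonical_forms (H : word -> Prop) : Prop :=
  forall m, (exists hs, canonical H hs m) /\
    (forall hs hs', canonical H hs m -> canonical H hs' m ->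
       length hs = length hs' /\
       forall i, i < length hs -> sim (nth i hs []) (nth i hs' [])).

Definition basis (H : word -> Prop) : Prop :=
  atomic H /\ generating H /\ has_canonical_forms H.

Definition proper_basis (H : word -> Prop) : Prop := basis H /\ proper H.

Definition HP (a : word) : Prop := exists (t : T) (e : X), sim a [inl t; inr e].

End PL.

(* Main.v *)
Require Import Defs.
From Stdlib Require Import List ClassicalEpsilon Lia.
Import ListNotations.

#[local] Arguments sassoc {_}.
#[local] Arguments scomm {_}.
#[local] Arguments sidem {_}.
#[local] Arguments sone_l {_}.
#[local] Arguments massoc {_}.
#[local] Arguments mone_l {_}.
#[local] Arguments mone_r {_}.

Section Dev.
Context {T : Monoid} {X : Semilattice} (A : OPAction T X).

Notation xmi := excluded_middle_informative.
Definition NF : Type := (mcar T * list (scar X * mcar T))%type.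
Definition NW (N : NF) : word := nf_word (fst N) (snd N).
Definition pN (N : NF) : X := wplus A (NW N).

Lemma sop_one_r (a : X) : sop a sone = a.
Proof. rewrite scomm; apply sone_l. Qed.

Lemma sop_lc (a b c : X) : sop a (sop b c) = sop b (sop a c).
Proof. rewrite !sassoc, (scomm a b); reflexivity. Qed.

Lemma wact_mono (w : word) (x y : X) : sle x y -> sle (wact A w x) (wact A w y).
Proof.
  induction w as [|[t|e] w IH]; simpl; intro H; auto.
  - apply act_mono; auto.
  - specialize (IH H). unfold sle in *.
    rewrite <- sassoc, (sop_lc (wact A w x) e), sassoc, sidem, IH. reflexivity.
Qed.

Lemma sle_one (x : X) : sle x sone.
Proof. apply sop_one_r. Qed.

Definition cons_pair (f : X) (N : NF) : NF :=
  match N with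
  | (t0, (e1, t1) :: ps') =>
      if xmi (t0 = mone) then (mone, (f, t1) :: ps') else (mone, (f, t0) :: (e1, t1) :: ps')
  | (t0, []) => (mone, [(f, t0)])
  end.

Definition applyL (l : letter) (N : NF) : NF :=
  match l with
  | inl s => (mop s (fst N), snd N)
  | inr e => if xmi (sop e (pN N) = pN N) then N else cons_pair (sop e (pN N)) N
  end.

Definition applyw (w : word) (N : NF) : NF := fold_right applyL N w.
Definition nf (w : word) : NF := applyw w (mone, []).

Lemma pN_eq t0 ps : pN (t0, ps) = A t0 (wact A (pairs_word ps) sone).
Proof. reflexivity. Qed.

Lemma pw_cons e t ps : wact A (pairs_word ((e, t) :: ps)) sone = sop e (A t (wact A (pairs_word ps) sone)).
Proof. reflexivity. Qed.

Lemma P_cons f N : sop f (pN N) = f -> pN (cons_pair f N) = f.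
Proof.
  destruct N as [t0 [|[e1 t1] ps']]; intro H.
  - simpl cons_pair. rewrite pN_eq, act_one, pw_cons. exact H.
  - simpl cons_pair. destruct (xmi (t0 = mone)) as [->|Hn].
    + rewrite pN_eq, act_one, pw_cons.
      rewrite pN_eq, act_one, pw_cons in H.
      set (q := A t1 _) in *.
      rewrite <- H at 1. rewrite <- !sassoc, sidem. exact H.
    + rewrite pN_eq, act_one, pw_cons. exact H.
Qed.

Lemma P_app l N : pN (applyL l N) = wact A [l] (pN N).
Proof.
  destruct N as [t0 ps]. destruct l as [s|e]; simpl applyL.
  - rewrite !pN_eq; simpl. symmetry; apply act_comp.
  - destruct (xmi _) as [H|H].
    + simpl. symmetry; exact H.
    + change (pN (cons_pair (sop e (pN (t0,ps))) (t0,ps)) = sop e (pN (t0,ps))). apply P_cons. rewrite <- sassoc, sidem. reflexivity.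
Qed.

Lemma P_w w N : pN (applyw w N) = wact A w (pN N).
Proof.
  induction w as [|l w IH]; simpl; auto.
  change (pN (applyL l (applyw w N)) = wact A (l :: w) (pN N)).
  rewrite P_app, IH. destruct l; reflexivity.
Qed.

Lemma cons_cons g f N : cons_pair g (cons_pair f N) = cons_pair g N.
Proof.
  destruct N as [t0 [|[e1 t1] ps']]; simpl.
  - destruct (xmi (@mone T = mone)); [reflexivity|congruence].
  - destruct (xmi (t0 = mone)); simpl; destruct (xmi (@mone T = mone)); congruence.
Qed.

Lemma I_sim a b : sim A a b -> forall N, applyw a N = applyw b N.
Proof.
  induction 1; intro N.
  - destruct N; simpl. rewrite massoc. reflexivity.
  - change (applyL (inr e) (applyL (inr f) N) = applyL (inr (sop e f)) N). set (p := pN N). unfold applyL at 2. fold p.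
    destruct (xmi (sop f p = p)) as [Hf|Hf].
    + unfold applyL. fold p.
      assert (E : sop (sop e f) p = sop e p) by (rewrite <- sassoc, Hf; reflexivity).
      rewrite E. reflexivity.
    + assert (Hp : pN (cons_pair (sop f p) N) = sop f p)
        by (apply P_cons; fold p; rewrite <- sassoc, sidem; reflexivity).
      unfold applyL. rewrite Hp. fold p.
      assert (E : sop (sop e f) p = sop e (sop f p)) by (rewrite sassoc; reflexivity).
      rewrite E.
      destruct (xmi (sop e (sop f p) = sop f p)) as [He|He].
      * rewrite He. destruct (xmi (sop f p = p)); [contradiction|reflexivity].
      * rewrite cons_cons.
        destruct (xmi (sop e (sop f p) = p)) as [Hq|]; [|reflexivity].
        exfalso; apply Hf.
        rewrite <- Hq at 1. rewrite (sop_lc f e), (sassoc f f p), sidem. exact Hq.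
  - destruct N; simpl. rewrite mone_l. reflexivity.
  - simpl. destruct N as [t0 ps]; simpl. rewrite mone_l.
    unfold applyL. rewrite sone_l. destruct (xmi _); [reflexivity|congruence].
  - simpl. change (applyL (inr (wplus A a)) (applyw a N) = applyw a N).
    unfold applyL. rewrite P_w.
    destruct (xmi _) as [|Hn]; [reflexivity|exfalso; apply Hn].
    unfold wplus. rewrite scomm. apply wact_mono, sle_one.
  - reflexivity.
  - symmetry; auto.
  - rewrite IHsim1; auto.
  - unfold applyw in *. rewrite !fold_right_app. rewrite <- IHsim1. f_equal. apply IHsim2.
Qed.

Lemma sim_drop1 (w : word) : sim A (inl mone :: w) w.
Proof.
  change (sim A ([inl mone] ++ w) ([] ++ w)).
  apply sim_cat; [apply sim_sym, sim_nil|apply sim_refl].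
Qed.

Lemma sim_consl (l : letter) (a b : word) : sim A a b -> sim A (l :: a) (l :: b).
Proof. intro H. change (sim A ([l] ++ a) ([l] ++ b)). apply sim_cat; auto using sim_refl. Qed.

Lemma E1 e (w : word) : sim A (inr e :: w) (inr (sop e (wplus A w)) :: w).
Proof.
  eapply sim_trans. apply sim_consl, sim_sym, sim_plus.
  change (sim A ([inr e; inr (wplus A w)] ++ w) ([inr (sop e (wplus A w))] ++ w)).
  apply sim_cat; [apply sim_XX|apply sim_refl].
Qed.

Lemma S_cons f N : sop f (pN N) = f -> sim A (NW (cons_pair f N)) (inr f :: NW N).
Proof.
  destruct N as [t0 [|[e1 t1] ps']]; intro H; simpl cons_pair.
  - apply sim_drop1.
  - destruct (xmi (t0 = mone)) as [->|Hn].
    + change (sim A (inl mone :: inr f :: inl t1 :: pairs_word ps')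
                     (inr f :: inl mone :: inr e1 :: inl t1 :: pairs_word ps')).
      eapply sim_trans. apply sim_drop1.
      apply sim_sym. eapply sim_trans. apply sim_consl, sim_drop1.
      apply (sim_trans _ _ ([inr (sop f e1)] ++ (inl t1 :: pairs_word ps'))).
      change (sim A ([inr f; inr e1] ++ (inl t1 :: pairs_word ps'))
                    ([inr (sop f e1)] ++ (inl t1 :: pairs_word ps'))).
      apply sim_cat; [apply sim_XX|apply sim_refl].
      replace (sop f e1) with f; [apply sim_refl|].
      rewrite pN_eq, act_one, pw_cons in H.
      rewrite <- H. rewrite <- sassoc. f_equal.
      rewrite (scomm _ e1), sassoc, sidem. reflexivity.
    + apply sim_drop1.
Qed.

Lemma S_L l N : sim A (NW (applyL l N)) (l :: NW N).
Proof.
  destruct l as [s|e].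
  - destruct N as [t0 ps]. unfold NW; simpl. unfold nf_word.
    change (sim A ([inl (mop s t0)] ++ pairs_word ps) ([inl s; inl t0] ++ pairs_word ps)).
    apply sim_cat; [apply sim_sym, sim_TT|apply sim_refl].
  - unfold applyL. destruct (xmi _) as [H|H].
    + eapply sim_trans; [|apply sim_sym, E1]. fold (pN N). rewrite H.
      apply sim_sym, sim_plus.
    + eapply sim_trans; [|apply sim_sym, E1]. fold (pN N).
      apply S_cons. rewrite <- sassoc, sidem. reflexivity.
Qed.

Lemma S_w w N : sim A (NW (applyw w N)) (w ++ NW N).
Proof.
  induction w as [|l w IH]; simpl.
  - apply sim_refl.
  - eapply sim_trans. apply S_L. apply sim_consl, IH.
Qed.

Lemma S_nf w : sim A (NW (nf w)) w.
Proof.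
  eapply sim_trans. apply S_w. unfold NW; simpl. unfold nf_word; simpl.
  rewrite <- (app_nil_r w) at 2. apply sim_cat; [apply sim_refl|apply sim_sym, sim_nil].
Qed.

Lemma sim_iff a b : sim A a b <-> nf a = nf b.
Proof.
  split.
  - intro H. apply I_sim; auto.
  - intro H. eapply sim_trans; [apply sim_sym, S_nf|]. rewrite H. apply S_nf.
Qed.

Lemma wplus_nf a : wplus A a = pN (nf a).
Proof. unfold nf. rewrite P_w. rewrite pN_eq, act_one. reflexivity. Qed.

Definition C1 (e : X) (t : T) (post : list (scar X * mcar T)) : Prop :=
  e <> sone /\ (post <> [] -> t <> mone) /\ slt e (wplus A (inl t :: pairs_word post)).

Lemma nfc_nil : nf_conds A [].
Proof. intros pre e t post H. destruct pre; discriminate. Qed.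

Lemma nfc_cons e t ps : nf_conds A ((e, t) :: ps) <-> C1 e t ps /\ nf_conds A ps.
Proof.
  split.
  - intro H. split.
    + apply (H [] e t ps). reflexivity.
    + intros pre e' t' post Hp. apply (H ((e, t) :: pre)). rewrite Hp. reflexivity.
  - intros [H1 H2] pre e' t' post Hp. destruct pre as [|p pre].
    + injection Hp; intros; subst. exact H1.
    + injection Hp; intros Hp' Hq. apply (H2 pre). exact Hp'.
Qed.

Lemma V_cons f N : nf_conds A (snd N) -> sop f (pN N) = f -> f <> pN N ->
  nf_conds A (snd (cons_pair f N)).
Proof.
  intros HN H Hne.
  assert (Hf1 : f <> sone).
  { intro E; subst f. apply Hne. rewrite sone_l in H. auto. }
  destruct N as [t0 [|[e1 t1] ps']]; simpl cons_pair; simpl snd in *.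
  - apply nfc_cons. split; [|apply nfc_nil].
    split; [auto|split; [congruence|]]. split; auto.
  - destruct (xmi (t0 = mone)) as [->|Hn].
    + apply nfc_cons in HN. destruct HN as [[He1 [Ht1 [Hs1 Hn1]]] Hr].
      apply nfc_cons. split; [|exact Hr].
      split; [auto|split; [auto|]].
      rewrite pN_eq, act_one, pw_cons in H, Hne.
      unfold slt, sle in *. unfold wplus in *. simpl wact in *.
      set (q := A t1 _) in *.
      assert (Hfq : sop f q = f).
      { rewrite <- H at 2. rewrite <- H at 1. rewrite <- !sassoc, sidem. reflexivity. }
      split; [exact Hfq|].
      intro E. rewrite Hs1 in H. rewrite E in H. apply Hn1.
      rewrite <- Hs1 at 1. rewrite scomm. exact H.
    + apply nfc_cons. split; [|exact HN].
      split; [auto|split; [auto|]]. split; auto.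
Qed.

Lemma V_L l N : nf_conds A (snd N) -> nf_conds A (snd (applyL l N)).
Proof.
  intro H. destruct l as [s|e]; simpl; auto.
  destruct (xmi _) as [|Hn]; auto.
  apply V_cons; auto. rewrite <- sassoc, sidem; reflexivity.
Qed.

Lemma V_nf w : nf_conds A (snd (nf w)).
Proof.
  induction w as [|l w IH]; simpl. apply nfc_nil.
  apply V_L, IH.
Qed.

Lemma F_pw ps : nf_conds A ps -> nf (pairs_word ps) = (mone, ps).
Proof.
  induction ps as [|[e t] ps' IH]; intro H; [reflexivity|].
  apply nfc_cons in H. destruct H as [[He [Ht [Hs Hne]]] Hr].
  change (applyL (inr e) (applyL (inl t) (nf (pairs_word ps'))) = (mone, (e, t) :: ps')).
  rewrite IH by exact Hr. simpl applyL at 2. rewrite mone_r.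
  unfold applyL. change (pN (t, ps')) with (wplus A (inl t :: pairs_word ps')).
  rewrite Hs. destruct (xmi (e = _)) as [E|_]; [contradiction|].
  destruct ps' as [|[e1 t1] ps'']; simpl; [reflexivity|].
  destruct (xmi (t = mone)) as [E|_]; [exfalso; apply Ht; [discriminate|exact E]|reflexivity].
Qed.

Lemma F_nf t0 ps : nf_conds A ps -> nf (nf_word t0 ps) = (t0, ps).
Proof.
  intro H. change (applyL (inl t0) (nf (pairs_word ps)) = (t0, ps)).
  rewrite F_pw by exact H. simpl. rewrite mone_r. reflexivity.
Qed.

Lemma star_eq a : star A a = [inr (star_val (snd (nf a)))].
Proof.
  unfold star.
  match goal with |- context [epsilon ?i ?P] =>
    pose proof (epsilon_spec i P) as HE; set (q := epsilon i P) in * end.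
  destruct HE as [Hs Hc].
  - exists (nf a). split; [apply S_nf|apply V_nf].
  - assert (Eq : nf a = (fst q, snd q)).
    { rewrite <- (F_nf (fst q) (snd q) Hc). apply sim_iff. apply sim_sym, Hs. }
    rewrite Eq. reflexivity.
Qed.

Lemma sim_inv_star a b : sim A a b -> star A a = star A b.
Proof. intro H. rewrite !star_eq. apply sim_iff in H. rewrite H. reflexivity. Qed.

Lemma sim_inv_wplus a b : sim A a b -> wplus A a = wplus A b.
Proof. intro H. rewrite !wplus_nf. apply sim_iff in H. rewrite H. reflexivity. Qed.

Lemma sim_inv_plus a b : sim A a b -> plus A a = plus A b.
Proof. intro H. unfold plus. rewrite (sim_inv_wplus a b H). reflexivity. Qed.

Lemma sim_inv_proj a b : sim A a b -> is_proj A a -> is_proj A b.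
Proof. intros H [x Hx]. exists x. eapply sim_trans; [apply sim_sym, H|exact Hx]. Qed.

Lemma pN_init : pN (mone, []) = sone.
Proof. rewrite pN_eq, act_one. reflexivity. Qed.

Lemma nf_inr (x : X) : nf [inr x] = if xmi (x = sone) then (mone, []) else (mone, [(x, mone)]).
Proof.
  change (applyL (inr x) (mone, []) = if xmi (x = sone) then (mone, []) else (mone, [(x, mone)])).
  unfold applyL. rewrite pN_init, sop_one_r.
  destruct (xmi (x = sone)); reflexivity.
Qed.

Lemma inr_inj (x y : X) : sim A [inr x] [inr y] -> x = y.
Proof.
  intro H. apply sim_iff in H. rewrite !nf_inr in H.
  destruct (xmi (x = sone)), (xmi (y = sone)); try congruence.
Qed.

Lemma sim_inr (x y : X) : x = y -> sim A [inr x] [inr y].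
Proof. intros ->. apply sim_refl. Qed.

Definition mk (p : mcar T * scar X) : word (T:=T) (X:=X) := [inl (fst p); inr (snd p)].

Lemma nf_mk s f : nf (mk (s, f)) = if xmi (f = sone) then (s, []) else (s, [(f, mone)]).
Proof.
  change (applyL (inl s) (nf [inr f]) = if xmi (f = sone) then (s, []) else (s, [(f, mone)])).
  rewrite nf_inr. destruct (xmi (f = sone)); simpl; rewrite mone_r; reflexivity.
Qed.

Lemma star_mk s f : star A (mk (s, f)) = [inr f].
Proof.
  rewrite star_eq, nf_mk. destruct (xmi (f = sone)) as [->|Hn]; [reflexivity|].
  simpl. destruct (xmi (@mone T = mone)); [reflexivity|congruence].
Qed.

Lemma plus_mk s f : plus A (mk (s, f)) = [inr (A s f)].
Proof. unfold plus, wplus, mk. simpl. rewrite sop_one_r. reflexivity. Qed.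

Lemma proj_mk s f : is_proj A (mk (s, f)) <-> s = mone.
Proof.
  split.
  - intros [x Hx]. apply sim_iff in Hx. rewrite nf_mk, nf_inr in Hx.
    destruct (xmi (f = sone)), (xmi (x = sone)); congruence.
  - intros ->. exists f. apply sim_drop1.
Qed.

Lemma ltE_inr (f q : X) : ltE A [inr f] [inr q] <-> slt f q.
Proof.
  unfold ltE, leE, slt, sle. split.
  - intros [H1 H2]. split.
    + apply inr_inj. eapply sim_trans; [apply sim_sym, sim_XX|exact H1].
    + intro E. apply H2. subst. apply sim_refl.
  - intros [H1 H2]. split.
    + eapply sim_trans; [apply sim_XX|]. rewrite H1. apply sim_refl.
    + intro E. apply H2. apply inr_inj; auto.
Qed.

Fixpoint tpart (w : word (T:=T) (X:=X)) : T :=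
  match w with
  | [] => mone
  | inl t :: w' => mop t (tpart w')
  | inr _ :: w' => tpart w'
  end.

Lemma tpart_app a c : tpart (a ++ c) = mop (tpart a) (tpart c).
Proof.
  induction a as [|[t|e] a IH]; simpl.
  - rewrite mone_l; reflexivity.
  - rewrite IH, massoc; reflexivity.
  - exact IH.
Qed.

Lemma tpart_sim a b : sim A a b -> tpart a = tpart b.
Proof.
  induction 1; simpl; auto.
  - rewrite massoc; reflexivity.
  - rewrite mone_l; reflexivity.
  - rewrite mone_l; reflexivity.
  - congruence.
  - rewrite !tpart_app; congruence.
Qed.

Lemma tpart_proj a : is_proj A a -> tpart a = mone.
Proof. intros [x Hx]. apply tpart_sim in Hx. exact Hx. Qed.

Lemma tpart_sigma a b : sigma A a b -> tpart a = tpart b.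
Proof.
  induction 1.
  - apply tpart_sim; auto.
  - rewrite !tpart_proj; auto.
  - auto.
  - congruence.
  - rewrite !tpart_app; congruence.
Qed.

Lemma nil_proj : is_proj A [].
Proof. exists sone. eapply sim_trans; [apply sim_nil|apply sim_one]. Qed.

Lemma inr_proj (e : X) : is_proj A [inr e].
Proof. exists e. apply sim_refl. Qed.

Lemma sigma_tp m : sigma A m [inl (tpart m)].
Proof.
  induction m as [|[t|e] m IH].
  - apply sg_sim, sim_nil.
  - apply (sg_trans _ _ ([inl t] ++ [inl (tpart m)])).
    + change (sigma A ([inl t] ++ m) ([inl t] ++ [inl (tpart m)])).
      apply sg_cat; [apply sg_sim, sim_refl|exact IH].
    + apply sg_sim, sim_TT.
  - apply (sg_trans _ _ ([] ++ m)); [|exact IH].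
    change (sigma A ([inr e] ++ m) ([] ++ m)).
    apply sg_cat; [apply sg_proj; [apply inr_proj|apply nil_proj]|apply sg_sim, sim_refl].
Qed.

Lemma sim_add1 (t : T) : sim A [inl t] (mk (t, sone)).
Proof.
  apply sim_sym. change (sim A ([inl t] ++ [inr sone]) ([inl t] ++ [])).
  apply sim_cat; [apply sim_refl|].
  eapply sim_trans; [apply sim_sym, sim_one|apply sim_sym, sim_nil].
Qed.

Fixpoint Lv (L : list (mcar T * scar X)) : Prop :=
  match L with
  | [] => False
  | (s, f) :: L' =>
      match L' with
      | [] => True
      | (s', f') :: _ => slt f (A s' f') /\ s' <> mone /\ Lv L'
      end
  end.

Fixpoint tnf_of (L : list (mcar T * scar X)) : NF :=
  match L with
  | [] => (mone, [])
  | (s, f) :: L' =>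
      match L' with
      | [] => if xmi (f = sone) then (s, []) else (s, [(f, mone)])
      | _ => (s, (f, fst (tnf_of L')) :: snd (tnf_of L'))
      end
  end.

Lemma tnf_cons2 s f L' : L' <> [] -> tnf_of ((s, f) :: L') = (s, (f, fst (tnf_of L')) :: snd (tnf_of L')).
Proof. destruct L'; [congruence|reflexivity]. Qed.

Lemma fst_tnf s f L' : fst (tnf_of ((s, f) :: L')) = s.
Proof. destruct L'; simpl; [destruct (xmi _)|]; reflexivity. Qed.

Lemma snd_tnf_nil s f L' : snd (tnf_of ((s, f) :: L')) = [] -> L' = [] /\ f = sone.
Proof.
  destruct L' as [|p L'']; simpl.
  - destruct (xmi (f = sone)); simpl; [auto|discriminate].
  - discriminate.
Qed.

Lemma wplus_tnf s f L' : Lv ((s, f) :: L') -> pN (tnf_of ((s, f) :: L')) = A s f.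
Proof.
  revert s f. induction L' as [|[s' f'] L'' IH]; intros s f HL.
  - simpl. destruct (xmi (f = sone)) as [->|Hn].
    + reflexivity.
    + rewrite pN_eq, pw_cons, act_one. simpl. rewrite sop_one_r. reflexivity.
  - destruct HL as [[Hs _] [_ HL']].
    rewrite tnf_cons2 by discriminate.
    rewrite fst_tnf.
    specialize (IH s' f' HL').
    destruct (tnf_of ((s', f') :: L'')) as [s0 ps] eqn:E.
    pose proof (fst_tnf s' f' L'') as Ef. rewrite E in Ef. simpl in Ef. subst s0.
    simpl snd. rewrite pN_eq, pw_cons. rewrite pN_eq in IH. rewrite IH. rewrite Hs. reflexivity.
Qed.

Lemma slt_ne1 (f q : X) : slt f q -> f <> sone.
Proof. intros [H1 H2] E. subst. unfold sle in H1. rewrite sone_l in H1. auto. Qed.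

Lemma V_tnf L : Lv L -> nf_conds A (snd (tnf_of L)).
Proof.
  induction L as [|[s f] L' IH]; [contradiction|].
  destruct L' as [|[s' f'] L''].
  - intros _. simpl. destruct (xmi (f = sone)) as [|Hn]; simpl; [apply nfc_nil|].
    apply nfc_cons. split; [|apply nfc_nil]. split; [auto|split; [congruence|]].
    unfold wplus; simpl. rewrite act_one. split; [apply sle_one|auto].
  - intros HL. pose proof HL as HL0. destruct HL as [Hs [Hs' HL']].
    rewrite tnf_cons2 by discriminate. rewrite fst_tnf.
    change (nf_conds A ((f, s') :: snd (tnf_of ((s', f') :: L'')))).
    apply nfc_cons. split; [|apply IH, HL'].
    split; [eapply slt_ne1; eauto|split; [auto|]].
    pose proof (wplus_tnf s' f' L'' HL') as W.
    destruct (tnf_of ((s', f') :: L'')) as [s0 ps] eqn:E.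
    pose proof (fst_tnf s' f' L'') as Ef. rewrite E in Ef. simpl in Ef. subst s0.
    simpl snd. change (slt f (pN (s', ps))). rewrite W. exact Hs.
Qed.

Lemma sim_drop_end (w : word) : sim A (w ++ [inl mone]) w.
Proof.
  rewrite <- (app_nil_r w) at 2. apply sim_cat; [apply sim_refl|apply sim_sym, sim_nil].
Qed.

Lemma S_tnf L : Lv L -> sim A (NW (tnf_of L)) (concat (map mk L)).
Proof.
  induction L as [|[s f] L' IH]; [contradiction|].
  destruct L' as [|[s' f'] L''].
  - intros _. simpl. destruct (xmi (f = sone)) as [->|Hn].
    + unfold NW; simpl. apply sim_add1.
    + unfold NW; simpl. apply (sim_drop_end [inl s; inr f]).
  - intros HL. destruct HL as [_ [_ HL']].
    rewrite tnf_cons2 by discriminate. rewrite fst_tnf.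
    change (sim A ([inl s; inr f] ++ NW (s', snd (tnf_of ((s', f') :: L''))))
                  (mk (s, f) ++ concat (map mk ((s', f') :: L'')))).
    apply sim_cat; [apply sim_refl|].
    specialize (IH HL').
    replace (NW (s', snd (tnf_of ((s', f') :: L'')))) with (NW (tnf_of ((s', f') :: L''))); [exact IH|].
    unfold NW. rewrite fst_tnf. reflexivity.
Qed.

Lemma nf_tnf L : Lv L -> nf (concat (map mk L)) = tnf_of L.
Proof.
  intro HL. pose proof (S_tnf L HL) as E. apply sim_iff in E. unfold NW in E.
  rewrite F_nf in E by (apply V_tnf; auto).
  rewrite <- E. destruct (tnf_of L); reflexivity.
Qed.

Fixpoint lcf (t0 : T) (ps : list (scar X * mcar T)) : list (mcar T * scar X) :=
  match ps with
  | [] => [(t0, sone)]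
  | (e, t) :: ps' =>
      (t0, e) :: match ps' with
                 | [] => if xmi (t = mone) then [] else [(t, sone)]
                 | _ => lcf t ps'
                 end
  end.

Lemma lcf_ok ps : forall t0, nf_conds A ps -> Lv (lcf t0 ps) /\ tnf_of (lcf t0 ps) = (t0, ps).
Proof.
  induction ps as [|[e t] ps' IH]; intros t0 H.
  - simpl. split; auto. destruct (xmi (@sone X = sone)); [reflexivity|congruence].
  - apply nfc_cons in H. destruct H as [[He [Ht Hs]] Hr].
    destruct ps' as [|[e' t'] ps''].
    + simpl. destruct (xmi (t = mone)) as [->|Hn].
      * simpl. split; auto. destruct (xmi (e = sone)); [contradiction|reflexivity].
      * split.
        -- split; [exact Hs|split; [auto|exact I]].
        -- simpl. destruct (xmi (@sone X = sone)); [reflexivity|congruence].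
    + destruct (IH t Hr) as [HL Ht2].
      change (lcf t0 ((e, t) :: (e', t') :: ps'')) with ((t0, e) :: lcf t ((e', t') :: ps'')).
      assert (Hc : lcf t ((e', t') :: ps'') = (t, e') :: tl (lcf t ((e', t') :: ps''))) by reflexivity.
      split.
      * change (slt e (A t e') /\ t <> mone /\ Lv (lcf t ((e', t') :: ps''))). split; [|split; [apply Ht; discriminate|exact HL]].
        apply nfc_cons in Hr. destruct Hr as [[_ [_ [Hs' _]]] _].
        unfold slt, sle in *. unfold wplus in Hs, Hs'. simpl in Hs, Hs'.
        rewrite Hs' in Hs. exact Hs.
      * rewrite Hc. rewrite tnf_cons2 by discriminate. rewrite <- Hc, Ht2. reflexivity.
Qed.

Lemma lcf_tnf L : Lv L -> lcf (fst (tnf_of L)) (snd (tnf_of L)) = L.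
Proof.
  induction L as [|[s f] L' IH]; [contradiction|].
  destruct L' as [|[s' f'] L''].
  - intros _. simpl. destruct (xmi (f = sone)) as [->|Hn]; simpl; [reflexivity|].
    destruct (xmi (@mone T = mone)); [reflexivity|congruence].
  - intros HL. destruct HL as [_ [Hs' HL']]. specialize (IH HL').
    rewrite tnf_cons2 by discriminate. rewrite fst_tnf in IH.
    change (lcf s ((f, fst (tnf_of ((s',f')::L''))) :: snd (tnf_of ((s',f')::L''))) = (s,f)::(s',f')::L'').
    rewrite fst_tnf.
    destruct (snd (tnf_of ((s', f') :: L''))) as [|p ps0] eqn:E.
    + apply snd_tnf_nil in E. destruct E as [-> ->]. simpl.
      destruct (xmi (s' = mone)); [contradiction|reflexivity].
    + simpl. f_equal. exact IH.
Qed.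

Definition Cn (hs : list (word (T:=T) (X:=X))) : Prop :=
  (forall i, S i < length hs -> ltE A (star A (nth i hs [])) (plus A (nth (S i) hs []))) /\
  (forall i, 1 <= i < length hs -> ~ is_proj A (nth i hs [])).

Lemma Cn_one h : Cn [h].
Proof. split; intros i Hi; simpl in Hi; lia. Qed.

Lemma Cn_cons h h' hs : Cn (h :: h' :: hs) <->
  ltE A (star A h) (plus A h') /\ ~ is_proj A h' /\ Cn (h' :: hs).
Proof.
  unfold Cn. split.
  - intros [H1 H2]. split; [apply (H1 0); simpl; lia|].
    split; [apply (H2 1); simpl; lia|].
    split.
    + intros i Hi. apply (H1 (S i)). simpl in *; lia.
    + intros i Hi. apply (H2 (S i)). simpl in *; lia.
  - intros [H1 [H2 [H3 H4]]]. split.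
    + intros [|i] Hi; [exact H1|]. apply H3. simpl in *; lia.
    + intros [|[|i]] Hi; [lia|exact H2|]. apply (H4 (S i)). simpl in *; lia.
Qed.

Definition R (h : word (T:=T) (X:=X)) (p : mcar T * scar X) : Prop := sim A h (mk p).

Lemma Cn_Lv hs L : Forall2 R hs L -> L <> [] -> (Cn hs <-> Lv L).
Proof.
  induction 1 as [|h [s f] hs L Hh HF IH]; [congruence|intros _].
  destruct HF as [|h' [s' f'] hs' L' Hh' HF'].
  - split; intros _; [exact I|]. split; intros i Hi; simpl in Hi; lia.
  - rewrite Cn_cons. rewrite IH by discriminate.
    rewrite (sim_inv_star _ _ Hh), (sim_inv_plus _ _ Hh'), star_mk, plus_mk, ltE_inr.
    change (Lv ((s, f) :: (s', f') :: L')) with (slt f (A s' f') /\ s' <> mone /\ Lv ((s', f') :: L')).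
    split; intros [H1 [H2 H3]]; split; auto; split; auto.
    + intro E. apply H2. apply (sim_inv_proj (mk (s', f'))); [apply sim_sym, Hh'|]. apply proj_mk; auto.
    + intro P. apply H2. apply (proj_mk s' f'). apply (sim_inv_proj h'); auto.
Qed.

Lemma HP_R hs : Forall (HP A) hs -> exists L, Forall2 R hs L.
Proof.
  induction 1 as [|h hs [t [e He]] _ [L HL]].
  - exists []. constructor.
  - exists ((t, e) :: L). constructor; auto.
Qed.

Lemma R_concat hs L : Forall2 R hs L -> sim A (concat hs) (concat (map mk L)).
Proof.
  induction 1; [apply sim_refl|]. change (sim A (x ++ concat l) (mk y ++ concat (map mk l'))). apply sim_cat; auto.
Qed.

Lemma R_nth hs L : Forall2 R hs L -> forall i, i < length hs -> R (nth i hs []) (nth i L (mone, sone)).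
Proof.
  induction 1; intros i Hi; simpl in Hi; [lia|].
  destruct i; simpl; auto. apply IHForall2. lia.
Qed.

Lemma R_last hs L : Forall2 R hs L -> L <> [] -> R (last hs []) (last L (mone, sone)).
Proof.
  induction 1 as [|h p hs L Hh HF IH]; [congruence|intros _].
  destruct HF as [|h' p' hs' L']; [exact Hh|]. apply IH. discriminate.
Qed.

Lemma R_map L : Forall2 R (map mk L) L.
Proof. induction L; constructor; auto. apply sim_refl. Qed.

Lemma star_val_cons2 (x y : scar X * mcar T) ps : star_val (x :: y :: ps) = star_val (y :: ps).
Proof. reflexivity. Qed.

Lemma star_tnf L : Lv L -> star_val (snd (tnf_of L)) = snd (last L (mone, sone)).
Proof.
  induction L as [|[s f] L' IH]; [contradiction|].
  destruct L' as [|[s' f'] L''].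
  - intros _. simpl. destruct (xmi (f = sone)) as [->|Hn]; [reflexivity|].
    simpl. destruct (xmi (@mone T = mone)); [reflexivity|congruence].
  - intros HL. destruct HL as [_ [Hs' HL']]. specialize (IH HL').
    rewrite tnf_cons2 by discriminate. rewrite fst_tnf.
    change (star_val ((f, s') :: snd (tnf_of ((s', f') :: L''))) = snd (last ((s', f') :: L'') (mone, sone))).
    destruct (snd (tnf_of ((s', f') :: L''))) as [|p ps0] eqn:E.
    + apply snd_tnf_nil in E. destruct E as [-> ->]. simpl.
      destruct (xmi (s' = mone)); [contradiction|reflexivity].
    + rewrite star_val_cons2. exact IH.
Qed.

Lemma HP_mk p : HP A (mk p).
Proof. destruct p as [t e]. exists t, e. apply sim_refl. Qed.

Lemma canonical_R hs m : canonical A (HP A) hs m ->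
  exists L, Forall2 R hs L /\ Lv L /\ nf m = tnf_of L.
Proof.
  intros [Hne [HF [Hm [C1' C2']]]].
  destruct (HP_R hs HF) as [L HL].
  assert (LN : L <> []) by (intro; subst; inversion HL; congruence).
  assert (HLv : Lv L) by (apply (Cn_Lv hs L HL LN); split; auto).
  exists L. split; auto. split; auto.
  rewrite <- nf_tnf by auto. apply sim_iff.
  eapply sim_trans; [exact Hm|apply R_concat, HL].
Qed.

Lemma R_length hs L : Forall2 R hs L -> length hs = length L.
Proof. induction 1; simpl; auto. Qed.

Theorem main_dev :
  proper_basis A (HP A) /\
  (forall (alpha : word (T:=T) (X:=X)) (hs : list word),
     canonical A (HP A) hs alpha ->
     sim A (plus A alpha) (plus A (hd [] hs)) /\
     sim A (star A alpha) (star A (last hs []))).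
Proof.
  split.
  - split; [split; [|split]|].
    +
      split; [|split; [|split; [|split]]].
      * intros a [x Hx]. exists mone, x. eapply sim_trans; [exact Hx|apply sim_sym, sim_drop1].
      * intros h e [t [x Hh]] [y Hy].
        assert (E : sim A (h ++ e) (mk (t, sop x y))).
        { apply (sim_trans _ _ ([inl t; inr x] ++ [inr y])).
          - apply sim_cat; auto.
          - change (sim A ([inl t] ++ [inr x; inr y]) ([inl t] ++ [inr (sop x y)])).
            apply sim_cat; [apply sim_refl|apply sim_XX]. }
        split; [exists t, (sop x y); exact E|].
        rewrite (sim_inv_star _ _ E), star_mk, (sim_inv_star _ _ Hh).
        change (star A [inl t; inr x]) with (star A (mk (t, x))). rewrite star_mk.
        apply sim_sym. eapply sim_trans; [|apply sim_XX].
        change (sim A ([inr x] ++ e) ([inr x] ++ [inr y])).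
        apply sim_cat; [apply sim_refl|apply Hy].
      * intros h k [t [x Hh]] [s [y Hk]] _ Hle.
        change [inl t; inr x] with (mk (t, x)) in Hh.
        change [inl s; inr y] with (mk (s, y)) in Hk.
        rewrite (sim_inv_plus _ _ Hk), (sim_inv_star _ _ Hh), plus_mk, star_mk in Hle.
        unfold leE in Hle.
        assert (Hxy : sop (A s y) x = A s y).
        { apply inr_inj. eapply sim_trans; [apply sim_sym, sim_XX|exact Hle]. }
        assert (Wk : wplus A k = A s y).
        { rewrite (sim_inv_wplus _ _ Hk). unfold wplus, mk; simpl. rewrite sop_one_r; reflexivity. }
        assert (Hk2 : sim A (inr x :: k) k).
        { eapply sim_trans; [apply E1|]. rewrite Wk, scomm, Hxy, <- Wk. apply sim_plus. }
        assert (E : sim A (h ++ k) (mk (mop t s, y))).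
        { apply (sim_trans _ _ ([inl t; inr x] ++ k)); [apply sim_cat; auto using sim_refl|].
          apply (sim_trans _ _ ([inl t] ++ mk (s, y))).
          - change (sim A ([inl t] ++ (inr x :: k)) ([inl t] ++ mk (s, y))).
            apply sim_cat; [apply sim_refl|]. eapply sim_trans; [exact Hk2|exact Hk].
          - change (sim A ([inl t; inl s] ++ [inr y]) ([inl (mop t s)] ++ [inr y])).
            apply sim_cat; [apply sim_TT|apply sim_refl]. }
        split; [exists (mop t s), y; exact E|].
        rewrite (sim_inv_star _ _ E), (sim_inv_star _ _ Hk), !star_mk. apply sim_refl.
      * intro m. exists (mk (tpart m, sone)). split; [apply HP_mk|].
        eapply sg_trans; [apply sigma_tp|]. apply sg_sim, sim_add1.
      * intros h k w [t [x Hh]] _ _ _ _.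
        exists (mk (tpart h, sone)). split; [apply HP_mk|]. split.
        -- apply sg_sym. eapply sg_trans; [apply sigma_tp|]. apply sg_sim, sim_add1.
        -- rewrite star_mk. unfold leE, plus. eapply sim_trans; [apply sim_XX|].
           rewrite sop_one_r. apply sim_refl.
    +
      intro m. exists (map (fun l => match l with inl t => mk (t, sone) | inr e => mk (mone, e) end) m).
      split.
      * apply Forall_forall. intros h Hin. apply in_map_iff in Hin.
        destruct Hin as [[t|e] [<- _]]; apply HP_mk.
      * induction m as [|l m IH]; simpl; [apply sim_refl|].
        change (sim A ([l] ++ m) ((match l with inl t => mk (t, sone) | inr e => mk (mone, e) end) ++
           concat (map (fun l => match l with inl t => mk (t, sone) | inr e => mk (mone, e) end) m))).
        apply sim_cat; [|exact IH].
        destruct l as [t|e]; [apply sim_add1|apply sim_sym, sim_drop1].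
    +
      intro m. split.
      * set (L0 := lcf (fst (nf m)) (snd (nf m))).
        destruct (lcf_ok (snd (nf m)) (fst (nf m)) (V_nf m)) as [HL0 Ht0].
        fold L0 in HL0, Ht0.
        exists (map mk L0). split; [|split; [|split]].
        -- unfold L0. destruct (snd (nf m)) as [|[]]; simpl; discriminate.
        -- apply Forall_forall. intros h Hin. apply in_map_iff in Hin.
           destruct Hin as [p [<- _]]. apply HP_mk.
        -- apply sim_iff. rewrite nf_tnf by auto. rewrite Ht0. destruct (nf m); reflexivity.
        -- assert (LN : L0 <> []) by (unfold L0; destruct (snd (nf m)) as [|[]]; simpl; discriminate).
           apply (Cn_Lv (map mk L0) L0 (R_map L0) LN). exact HL0.
      * intros hs hs' H1 H2.
        destruct (canonical_R hs m H1) as [L [HL [Lv1 E1']]].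
        destruct (canonical_R hs' m H2) as [L' [HL' [Lv2 E2']]].
        assert (EL : L = L').
        { rewrite <- (lcf_tnf L Lv1), <- (lcf_tnf L' Lv2), <- E1', <- E2'. reflexivity. }
        subst L'. split.
        -- rewrite (R_length _ _ HL), (R_length _ _ HL'). reflexivity.
        -- intros i Hi. eapply sim_trans; [apply (R_nth _ _ HL i Hi)|].
           apply sim_sym, (R_nth _ _ HL'). rewrite (R_length _ _ HL'), <- (R_length _ _ HL). exact Hi.
    +
    intros h k [t [x Hh]] [s [y Hk]].
    change [inl t; inr x] with (mk (t, x)) in Hh.
    change [inl s; inr y] with (mk (s, y)) in Hk.
    split.
      * intros [Hst Hsg].
      rewrite (sim_inv_star _ _ Hh), (sim_inv_star _ _ Hk), !star_mk in Hst.
      apply inr_inj in Hst. subst y.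
      apply tpart_sigma in Hsg. rewrite (tpart_sim _ _ Hh), (tpart_sim _ _ Hk) in Hsg.
      simpl in Hsg. rewrite !mone_r in Hsg. subst s.
      eapply sim_trans; [exact Hh|apply sim_sym, Hk].
      * intro H. split; [rewrite (sim_inv_star _ _ H); apply sim_refl|apply sg_sim, H].
  - intros alpha hs Hc.
    destruct (canonical_R hs alpha Hc) as [L [HL [HLv E]]].
    destruct Hc as [Hne _].
    destruct L as [|[s1 f1] L']; [contradiction|].
    split.
    + destruct hs as [|h1 hs']; [congruence|]. simpl hd.
      inversion HL; subst.
      unfold plus. rewrite wplus_nf, E, wplus_tnf by auto.
      change (wplus A h1) with (wplus A h1).
      rewrite (sim_inv_wplus _ _ H2). unfold wplus, mk; simpl. rewrite sop_one_r. apply sim_refl.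
    + rewrite star_eq, E, star_tnf by auto.
      pose proof (R_last hs _ HL ltac:(discriminate)) as HR.
      unfold R in HR. rewrite (sim_inv_star _ _ HR).
      destruct (last ((s1, f1) :: L') (mone, sone)) as [sl fl]. rewrite star_mk. apply sim_refl.
Qed.

End Dev.

Theorem mainTheorem14 (T : Monoid) (X : Semilattice) (A : OPAction T X) :
  proper_basis A (HP A) /\
  (forall (alpha : word (T:=T) (X:=X)) (hs : list word),
     canonical A (HP A) hs alpha ->
     sim A (plus A alpha) (plus A (hd [] hs)) /\
     sim A (star A alpha) (star A (last hs []))).
Proof. exact (main_dev A). Qed.
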